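(* Let $S$ be a factor set with slot set $\Omega$ and symmetry group $\mathcal{G}(S)$, let $\rho$ be the group of relabelings of internal index symbols, and let $\pi,\pi_1,\pi_2$ be colorings of $\Omega$ encoding tensor products with factor set $S$. Then $\pi_1$ and $\pi_2$ are $(\mathcal{G}(S),\rho)$-equivalent (i.e. the two tensor products are equivalent) if and only if $G^E(\pi_1)\cong G^E(\pi_2)$ under $\mathcal{G}(S)$. Moreover, $\operatorname{Aut}_{\mathcal{G}(S)}(G(\pi))=\mathcal{G}_{\varpi(\pi)}(S)$ and $\operatorname{Aut}_{\mathcal{G}(S)}(G^E(\pi))=\operatorname{Ker}\phi$, the pointwise stabilizer of $\Omega_E(\pi)$ in $\mathcal{G}_{\varpi(\pi)}(S)$.
   Context: A $d$-way tensor $\mathbf{X}$ has permutation symmetry group $\mathcal{G}(\mathbf{X})\le\mathcal{S}_d$ of all $g$ with $X^{p_{g(1)}\cdots p_{g(d)}}=X^{p_1\cdots p_d}$. A factor set $S=(\mathbf{X}_1,\dots,\mathbf{X}_k)$ has slots $\Omega=\{1,\dots,D\}$, $D=\sum d_i$; $\mathcal{G}(S)\le\mathcal{S}_D$ is the direct product of the $\mathcal{G}(\mathbf{X}_i)$ acting on their slot blocks, with each run of $n$ identical factors $\mathbf{X}$ contributing $(\mathcal{G}(\mathbf{X})^n)\rtimes\mathcal{S}_n$. A tensor product is encoded by a coloring $\pi:\Omega\to\{\text{index symbols}\}$, each external symbol used once, each internal symbol exactly twice, each symbol having a type (e.g. occupied, virtual); $\Omega_E(\pi),\Omega_I(\pi)$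 are the slots with external/internal symbols. $\rho$ is the group of permutations of index symbols fixing external symbols and permuting internal ones within each type; $\pi_1,\pi_2$ are $(\mathcal{G}(S),\rho)$-equivalent if $\pi_1\circ g=h\circ\pi_2$ for some $g\in\mathcal{G}(S)$, $h\in\rho$. Contraction pattern: $\varpi(\pi)=\{\theta(i,j):i\ne j\in\Omega_I(\pi),\pi(i)=\pi(j)\}$, $\theta(i,j)$ the unordered pair $\{i,j\}$ tagged by the type of $\pi(i)$; $g\circ\theta(i,j)=\theta(g(i),g(j))$; $\mathcal{G}_{\varpi(\pi)}(S)=\{g\in\mathcal{G}(S):g\circ\varpi(\pi)=\varpi(\pi)\}$; $\phi$ is the homomorphism restricting $g\in\mathcal{G}_{\varpi(\pi)}(S)$ to $\Omega_E(\pi)$. Graphs: the vertex set is $\Omega$ together with one auxiliary vertex $0$ (fixed by all of $\mathcal{G}(S)$; omitted when there are no external indices). The edges are $\{0,j\}$ for $j\in\Omega_E(\pi)$ and $\{i,j\}$ for each $\theta(i,j)\in\varpi(\pi)$. Each edge carries a label $\mathrm{type}[\mathrm{index}]$: in the externally labeled, internally unlabeled graph $G^E(\pi)$, an edge $\{0,j\}$ is labeled by the type and the specific external symbol $\pi(j)$, while internal edges are labeled by their type and a generic (unspecific) index; in the unlabeled graph (skeleton) $G(\pi)$, every edge is labeled by its type and a generic index. $g\in\mathcal{G}(S)$ acts on a labeled edge set by mapping each labeled edge $\{u,v\}$ to $\{g(u),g(v)\}$ with the same label. Two such graphs with labeled edge sets $\mathcal{E}_1,\mathcal{E}_2$ are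 isomorphic under $\mathcal{G}(S)$ if $g\circ\mathcal{E}_1=\mathcal{E}_2$ for some $g\in\mathcal{G}(S)$; $\operatorname{Aut}_{\mathcal{G}(S)}(G)=\{g\in\mathcal{G}(S): g\circ\mathcal{E}=\mathcal{E}\}$. *)

(* Defs.v *)
From mathcomp Require Import all_boot all_fingroup.
Set Implicit Arguments. Unset Strict Implicit. Unset Printing Implicit Defensive.

(* Index values live in a common carrier T; the values of
   type-t indices are those x with [range t x]. *)
Record tensor (T V Ty : Type) := Tensor {
  tord : nat;
  tslot : 'I_tord -> Ty;
  tval : tord.-tuple T -> V }.
Arguments tslot {T V Ty} t _.
Arguments tval {T V Ty} t _.

Section Tensors.
Variables (T V Ty : Type) (range : Ty -> T -> Prop).

Definition tsym (X : tensor T V Ty) (g : {perm 'I_(tord X)}) : Prop :=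
  (forall q, tslot X (g q) = tslot X q) /\
  (forall p : (tord X).-tuple T, (forall q, range (tslot X q) (tnth p q)) ->
     tval X [tuple tnth p (g q) | q < tord X] = tval X p).
End Tensors.

Unset Implicit Arguments.
Section FactorSet.
Variables (T V : Type) (Ty : finType) (range : Ty -> T -> Prop).
Variables (k : nat) (X : 'I_k -> tensor T V Ty).

Definition fdim (i : 'I_k) : nat := tord (X i).
Definition nslots : nat := \sum_(i < k) fdim i.
Definition off (i : 'I_k) : nat := \sum_(j < k | j < i) fdim j.

(* G(S): direct product of the G(X_i) on their blocks, together with
   permutations of identical factors inside each run of identical factors
   ((G(X)^n) ⋊ S_n for each run). *)
Definition inGS (g : {perm 'I_nslots}) : Prop :=
  exists (sigma : {perm 'I_k}) (h : forall i : 'I_k, {perm 'I_(fdim i)}),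
    (forall i, X (sigma i) = X i) /\
    (forall (i l : 'I_k), minn i (sigma i) <= l <= maxn i (sigma i) -> X l = X i) /\
    (forall i : 'I_k, tsym range (h i)) /\
    (forall (s : 'I_nslots) (i : 'I_k) (p : 'I_(fdim i)),
        (s : nat) = off i + p -> (g s : nat) = off (sigma i) + h i p).

Variables (Sym : finType) (ty : Sym -> Ty) (isExt : pred Sym).

Definition coloring (pi : 'I_nslots -> Sym) : Prop :=
  (forall (s : 'I_nslots) (i : 'I_k) (p : 'I_(fdim i)),
      (s : nat) = off i + p -> ty (pi s) = tslot (X i) p) /\
  (forall a, isExt a -> #|[set s | pi s == a]| = 1) /\
  (forall a, ~~ isExt a -> #|[set s | pi s == a]| \in [:: 0; 2]).

Definition inrho (h : {perm Sym}) : Prop :=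
  (forall a, isExt a -> h a = a) /\ (forall a, ty (h a) = ty a).

Definition GSrho_equiv (pi1 pi2 : 'I_nslots -> Sym) : Prop :=
  exists g h, inGS g /\ inrho h /\ forall s, pi1 (g s) = h (pi2 s).

Definition OmegaE (pi : 'I_nslots -> Sym) : {set 'I_nslots} :=
  [set s | isExt (pi s)].
Definition OmegaI (pi : 'I_nslots -> Sym) : {set 'I_nslots} :=
  [set s | ~~ isExt (pi s)].

Definition varpi (pi : 'I_nslots -> Sym) : {set {set 'I_nslots} * Ty} :=
  [set ([set i; j], ty (pi i)) | i in OmegaI pi, j in OmegaI pi
                                & (i != j) && (pi i == pi j)].

Definition act_pattern (g : {perm 'I_nslots}) (P : {set {set 'I_nslots} * Ty}) :=
  [set (g @: e.1, e.2) | e : ({set 'I_nslots} * Ty)%type in P].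

Definition G_varpi (pi : 'I_nslots -> Sym) (g : {perm 'I_nslots}) : Prop :=
  inGS g /\ act_pattern g (varpi pi) = varpi pi.

Definition Ker_phi (pi : 'I_nslots -> Sym) (g : {perm 'I_nslots}) : Prop :=
  G_varpi pi g /\ forall s, s \in OmegaE pi -> g s = s.

(* Graphs: vertices are option 'I_nslots, None being the auxiliary vertex 0.
   Labeled edges: (unordered pair, (type, index)), index None = generic. *)
Definition vtx := option 'I_nslots.
Definition ledge := ({set vtx} * (Ty * option Sym))%type.

Definition GE (pi : 'I_nslots -> Sym) : {set ledge} :=
  [set ([set None; Some j], (ty (pi j), Some (pi j))) | j in OmegaE pi] :|:
  [set ([set Some i; Some j], (ty (pi i), None)) | i in OmegaI pi, j in OmegaI pi
                                & (i != j) && (pi i == pi j)].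

Definition Gskel (pi : 'I_nslots -> Sym) : {set ledge} :=
  [set ([set None; Some j], (ty (pi j), None)) | j in OmegaE pi] :|:
  [set ([set Some i; Some j], (ty (pi i), None)) | i in OmegaI pi, j in OmegaI pi
                                & (i != j) && (pi i == pi j)].

Definition act_graph (g : {perm 'I_nslots}) (E : {set ledge}) : {set ledge} :=
  [set ((fun v : vtx => omap g v) @: e.1, e.2) | e : ledge in E].

Definition isomorphic_GS (E1 E2 : {set ledge}) : Prop :=
  exists g, inGS g /\ act_graph g E1 = E2.

Definition Aut_GS (E : {set ledge}) (g : {perm 'I_nslots}) : Prop :=
  inGS g /\ act_graph g E = E.

End FactorSet.

(* Main.v *)
Require Import Defs.
From mathcomp Require Import all_boot all_fingroup.
From Stdlib Require Import ClassicalEpsilon.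
Set Implicit Arguments. Unset Strict Implicit. Unset Printing Implicit Defensive.
Local Notation pinv s := (s^-1)%g.

Lemma perm_ext (Ty : finType) (S : finType) (ty : S -> Ty) (I : finType) (F G : I -> S) :
  (forall u v, (F u == F v) = (G u == G v)) -> (forall u, ty (G u) = ty (F u)) ->
  exists h : {perm S}, (forall u, h (F u) = G u) /\ (forall a, ty (h a) = ty a).
Proof.
move=> FG tyG.
pose A := [set F u | u in I]. pose B := [set G u | u in I].
pose phi a := if [pick u | F u == a] is Some u then G u else a.
have phiF u : phi (F u) = G u.
  rewrite /phi; case: pickP => [u' /eqP Hu|/(_ u)]; last by rewrite eqxx.
  by apply/eqP; rewrite -FG Hu.
pose Tt t := [set a | ty a == t].
pose C t := Tt t :\: A. pose D t := Tt t :\: B.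
have cardCD t : #|C t| = #|D t|.
  rewrite /C /D !cardsD.
  have -> : Tt t :&: B = phi @: (Tt t :&: A).
    apply/setP => b; apply/setIP/imsetP.
      case=> Hb /imsetP [u _ Eb]; subst b; exists (F u); last by rewrite phiF.
      move: Hb; rewrite !inE => /eqP <-; rewrite tyG eqxx /=; exact: imset_f.
    case=> a /setIP [Ha /imsetP [u _ Ea]] Eb; subst a b; rewrite phiF; split; last by rewrite imset_f.
    by move: Ha; rewrite !inE tyG.
  rewrite card_in_imset //.
  move=> a a' /setIP [_ /imsetP [u _ ->]] /setIP [_ /imsetP [u' _ ->]].
  by rewrite !phiF => /eqP; rewrite -FG => /eqP.
pose psi a := nth a (enum (D (ty a))) (index a (enum (C (ty a)))).
have psiP a : a \notin A -> psi a \in D (ty a).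
  move=> Ha; rewrite -mem_enum; apply: mem_nth.
  rewrite -cardE -cardCD cardE index_mem mem_enum !inE Ha eqxx //.
have tyD b t : b \in D t -> ty b = t by rewrite !inE => /andP [_ /eqP].
pose h0 a := if a \in A then phi a else psi a.
have h0inj : injective h0.
  move=> a a'; rewrite /h0.
  case: ifP => Ha; case: ifP => Ha'.
  - move: Ha Ha' => /imsetP [u _ ->] /imsetP [u' _ ->]; rewrite !phiF.
    by move/eqP; rewrite -FG => /eqP.
  - move: Ha => /imsetP [u _ ->]; rewrite phiF => E.
    have := psiP a' (negbT Ha'); rewrite -E !inE imset_f //= andbF //.
  - move: Ha' => /imsetP [u _ ->]; rewrite phiF => E.
    have := psiP a (negbT Ha); rewrite E !inE imset_f //= andbF //.
  - move=> E.
    have Ht : ty a = ty a'.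
      by rewrite -(tyD _ _ (psiP a (negbT Ha))) -(tyD _ _ (psiP a' (negbT Ha'))) E.
    move: E; rewrite /psi Ht.
    have inC x : x \notin A -> x \in enum (C (ty x)) by move=> Hx; rewrite mem_enum !inE Hx eqxx.
    have Ca := inC a (negbT Ha); have Ca' := inC a' (negbT Ha'); rewrite Ht in Ca.
    have sz x : x \in enum (C (ty a')) -> index x (enum (C (ty a'))) < size (enum (D (ty a'))).
      by move=> Hx; rewrite -!cardE -cardCD cardE index_mem.
    rewrite (set_nth_default a' a (sz _ Ca)) => /eqP.
    rewrite nth_uniq ?sz ?enum_uniq // => /eqP Hi.
    by rewrite -(nth_index a Ca) Hi (nth_index a Ca').
exists (perm h0inj); split=> [u|a]; rewrite permE /h0.
  by rewrite imset_f // phiF.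
case: ifP => Ha.
  by move: Ha => /imsetP [u _ ->]; rewrite phiF tyG.
exact: tyD (psiP a (negbT Ha)).
Qed.

Lemma tsym_inv (T V Ty : Type) (range : Ty -> T -> Prop) (A : tensor T V Ty) (h : {perm 'I_(tord A)}) :
  @tsym _ _ _ range A h -> @tsym _ _ _ range A ((pinv h)).
Proof.
case=> H1 H2; have H1' q : tslot A ((pinv h) q) = tslot A q by rewrite -{2}(permKV h q) H1.
split=> // p Hp.
set p' := [tuple tnth p ((pinv h) q) | q < tord A].
have Hp' q : range (tslot A q) (tnth p' q) by rewrite tnth_mktuple -H1'.
rewrite -(H2 p' Hp'); congr (Defs.tval A _); apply: eq_from_tnth => q.
by rewrite !tnth_mktuple permK.
Qed.

Lemma transport (T V Ty : Type) (range : Ty -> T -> Prop) (A B : tensor T V Ty) (e : A = B)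
  (H : {perm 'I_(tord A)}) : @tsym _ _ _ range A H ->
  exists H' : {perm 'I_(tord B)}, @tsym _ _ _ range B H' /\
    forall (p : 'I_(tord A)) (q : 'I_(tord B)), (p : nat) = q -> (H' q : nat) = H p.
Proof. case: B / e => HH; exists H; split=> // p q /val_inj ->; done. Qed.

Lemma tslot_eq (T V Ty : Type) (A B : tensor T V Ty) (e : A = B)
  (p : 'I_(tord A)) (q : 'I_(tord B)) : (p : nat) = q -> tslot A p = tslot B q.
Proof. by case: B / e q => q /val_inj ->. Qed.

Lemma decomp_nat (k : nat) (f : 'I_k -> nat) s : s < \sum_(j < k) f j ->
  exists i : 'I_k, \sum_(j < k | j < i) f j <= s < \sum_(j < k | j < i) f j + f i.
Proof.
elim: k f => [|k IH] f; first by rewrite big_ord0.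
rewrite big_ord_recr /=.
case: (ltnP s (\sum_(j < k) f (widen_ord (leqnSn k) j))) => Hs Hs2.
  have [i Hi] := IH _ Hs; exists (widen_ord (leqnSn k) i).
  suff -> : \sum_(j < k.+1 | j < widen_ord (leqnSn k) i) f j =
            \sum_(j < k | j < i) f (widen_ord (leqnSn k) j) by [].
  rewrite big_mkcond big_ord_recr /= ltnNge (ltnW (ltn_ord i)) addn0 -big_mkcond //.
exists ord_max.
suff -> : \sum_(j < k.+1 | j < @ord_max k) f j = \sum_(j < k) f (widen_ord (leqnSn k) j) by rewrite Hs.
rewrite big_mkcond big_ord_recr /= ltnn addn0; apply: eq_bigr => j _; by rewrite ltn_ord.
Qed.

Section FS.
Variables (T V : Type) (Ty : finType) (range : Ty -> T -> Prop) (k : nat) (X : 'I_k -> tensor T V Ty).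
Local Notation fdim := (fdim T V Ty k X).
Local Notation off := (off T V Ty k X).
Local Notation nslots := (nslots T V Ty k X).
Local Notation inGS := (inGS T V Ty range k X).

Lemma off_bound (i : 'I_k) (p : 'I_(fdim i)) : off i + p < nslots.
Proof.
apply: (leq_trans (n := off i + fdim i)); first by rewrite ltn_add2l.
rewrite /nslots (bigID (fun j : 'I_k => j < i)) /= leq_add2l.
by rewrite (bigD1 i) ?ltnn //= leq_addr.
Qed.

Lemma slot_decomp (s : 'I_nslots) : exists i (p : 'I_(fdim i)), (s : nat) = off i + p.
Proof.
have [i /andP [H1 H2]] := decomp_nat (ltn_ord s).
exists i; have Hp : s - off i < fdim i by rewrite ltn_subLR.
by exists (Ordinal Hp) => /=; rewrite subnKC.
Qed.

Lemma inGS_inv g : inGS g -> inGS ((pinv g)).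
Proof.
case=> sigma [h [Hsx [Hrun [Hts Hg]]]].
have ex i : exists H' : {perm 'I_(fdim i)}, @tsym _ _ _ range (X i) H' /\
    forall (p : 'I_(fdim ((pinv sigma) i))) (q : 'I_(fdim i)), (p : nat) = q ->
      (H' q : nat) = (pinv (h (pinv sigma i))) p.
  have e : X ((pinv sigma) i) = X i by rewrite -{2}(permKV sigma i) Hsx.
  have := transport e (tsym_inv (Hts _)). exact.
pose h' i := proj1_sig (constructive_indefinite_description _ (ex i)).
have h'P i := proj2_sig (constructive_indefinite_description _ (ex i)).
exists ((pinv sigma)), h'; split; [|split; [|split]].
- by move=> i; rewrite -{2}(permKV sigma i) Hsx.
- move=> i l Hl; set j := ((pinv sigma)) i.
  have Hi : sigma j = i by rewrite permKV.
  have -> : X i = X j by rewrite -Hi Hsx.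
  apply: Hrun; rewrite Hi minnC maxnC; exact Hl.
- by move=> i; case: (h'P i).
move=> s i p Hs; set j := ((pinv sigma)) i.
have Hi : sigma j = i by rewrite permKV.
have ej : fdim j = fdim i by rewrite /Defs.fdim -Hi Hsx.
have Hp0 : p < fdim j by rewrite ej.
set p0 := Ordinal Hp0.
set q := ((pinv (h j))) p0.
set t := Ordinal (off_bound q).
have gt : g t = s.
  apply: ord_inj; rewrite Hs (Hg t j q erefl) Hi /q permKV //.
rewrite -gt permK /=; congr (_ + _).
case: (h'P i) => _ H; by rewrite (H p0 p erefl).
Qed.

Variables (Sym : finType) (ty : Sym -> Ty) (isExt : pred Sym).

Lemma inGS_ty pi g : coloring T V Ty k X Sym ty isExt pi -> inGS g ->
  forall s, ty (pi (g s)) = ty (pi s).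
Proof.
case=> C1 _ [sigma [h [Hsx [_ [Hts Hg]]]]] s.
have [i [p Hs]] := slot_decomp s.
have ej : fdim (sigma i) = fdim i by rewrite /Defs.fdim Hsx.
have Hq : h i p < fdim (sigma i) by rewrite ej.
rewrite (C1 s i p Hs) (C1 (g s) (sigma i) (Ordinal Hq) (Hg s i p Hs)).
rewrite (@tslot_eq _ _ _ _ _ (Hsx i) (Ordinal Hq) (h i p) erefl).
by case: (Hts i) => ->.
Qed.
End FS.

Section M.
Variables (T V : Type) (Ty : finType) (range : Ty -> T -> Prop) (k : nat) (X : 'I_k -> tensor T V Ty).
Variables (Sym : finType) (ty : Sym -> Ty) (isExt : pred Sym).
Local Notation nslots := (nslots T V Ty k X).
Local Notation slot := ('I_nslots).
Local Notation vtx := (vtx T V Ty k X).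
Local Notation ledge := (ledge T V Ty k X Sym).
Local Notation col := (coloring T V Ty k X Sym ty isExt).
Local Notation OmegaI := (OmegaI T V Ty k X Sym isExt).
Local Notation OmegaE := (OmegaE T V Ty k X Sym isExt).
Local Notation varpi := (varpi T V Ty k X Sym ty isExt).
Local Notation act_graph := (act_graph T V Ty k X Sym).
Local Notation act_pattern := (act_pattern T V Ty k X).
Local Notation inrho := (inrho Ty Sym ty isExt).

Lemma col_ext_unique pi s t : col pi -> isExt (pi s) -> pi t = pi s -> t = s.
Proof.
case=> _ [C2 _] Hs Ht; have /eqP/cards1P [x Hx] := C2 _ Hs.
have : s \in [set u | pi u == pi s] by rewrite inE.
have : t \in [set u | pi u == pi s] by rewrite inE Ht.
by rewrite Hx !inE => /eqP -> /eqP ->.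
Qed.

Lemma col_ext_exists pi a : col pi -> isExt a -> exists s, pi s = a.
Proof.
case=> _ [C2 _] Ha; have /eqP/cards1P [x Hx] := C2 _ Ha.
have : x \in [set u | pi u == a] by rewrite Hx inE.
by rewrite inE => /eqP <-; exists x.
Qed.

Lemma col_partner pi s : col pi -> ~~ isExt (pi s) -> exists t, t != s /\ pi t = pi s.
Proof.
case=> _ [_ C3] Hs; have := C3 _ Hs.
have Hin : s \in [set u | pi u == pi s] by rewrite inE.
rewrite (cardsD1 s) Hin !inE /= eqSS => /cards1P [x Hx].
have : x \in [set u | pi u == pi s] :\ s by rewrite Hx inE.
by rewrite !inE => /andP [Hxs /eqP Hpx]; exists x.
Qed.

Definition XE (L : slot -> option Sym) (pi : slot -> Sym) : {set ledge} :=
  [set ([set None; Some j], (ty (pi j), L j)) | j in OmegaE pi].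
Definition IE (pi : slot -> Sym) : {set ledge} :=
  [set ([set Some i; Some j], (ty (pi i), None)) | i in OmegaI pi, j in OmegaI pi
                                & (i != j) && (pi i == pi j)].

Lemma XE_P L pi e : reflect (exists j, isExt (pi j) /\ e = ([set None; Some j], (ty (pi j), L j)))
  (e \in XE L pi).
Proof.
apply: (iffP imsetP) => [[j Hj ->]|[j [Hj ->]]]; exists j; by rewrite ?inE in Hj *.
Qed.

Lemma IE_P pi e : reflect (exists i j, [/\ ~~ isExt (pi i), ~~ isExt (pi j), i != j, pi i = pi j &
   e = ([set Some i; Some j], (ty (pi i), None))]) (e \in IE pi).
Proof.
apply: (iffP imset2P).
  case=> i j Hi; rewrite !inE in Hi * => /andP [Hj /andP [Hij /eqP Hp]] ->.
  by exists i, j.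
case=> i [j [Hi Hj Hij Hp ->]]; apply: (Imset2spec (x1 := i) (x2 := j)) => //.
  by rewrite inE.
by rewrite !inE Hj Hij Hp eqxx.
Qed.

Lemma varpi_P pi P : reflect (exists i j, [/\ ~~ isExt (pi i), ~~ isExt (pi j), i != j, pi i = pi j &
   P = ([set i; j], ty (pi i))]) (P \in varpi pi).
Proof.
apply: (iffP imset2P).
  case=> i j Hi; rewrite !inE in Hi * => /andP [Hj /andP [Hij /eqP Hp]] ->.
  by exists i, j.
case=> i [j [Hi Hj Hij Hp ->]]; apply: (Imset2spec (x1 := i) (x2 := j)) => //.
  by rewrite inE.
by rewrite !inE Hj Hij Hp eqxx.
Qed.

Definition aE (g : {perm slot}) (e : ledge) : ledge := ((fun v : vtx => omap g v) @: e.1, e.2).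

Lemma actP g (E : {set ledge}) e : reflect (exists2 e0, e0 \in E & e = aE g e0) (e \in act_graph g E).
Proof. exact: imsetP. Qed.
Lemma act_mem g (E : {set ledge}) e0 : e0 \in E -> aE g e0 \in act_graph g E.
Proof. move=> H; exact: (imset_f (fun e : ledge => aE g e) H). Qed.
Lemma act_U g A B : act_graph g (A :|: B) = act_graph g A :|: act_graph g B.
Proof. exact: imsetU. Qed.
Lemma aE_pair g (a b : vtx) l : aE g ([set a; b], l) = ([set omap g a; omap g b], l).
Proof. by rewrite /aE /= imsetU1 imset_set1. Qed.
Lemma patP (g : {perm slot}) (P : {set {set slot} * Ty}) Q : reflect (exists2 e0, e0 \in P & Q = (g @: e0.1, e0.2)) (Q \in act_pattern g P).
Proof. exact: imsetP. Qed.
Lemma pat_mem (g : {perm slot}) (P : {set {set slot} * Ty}) e0 : e0 \in P -> (g @: e0.1, e0.2) \in act_pattern g P.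
Proof. move=> H; exact: (imset_f (fun e : {set slot} * Ty => (g @: e.1, e.2)) H). Qed.
Lemma imset_pair (g : {perm slot}) (a b : slot) : g @: [set a; b] = [set g a; g b].
Proof. by rewrite imsetU1 imset_set1. Qed.

Lemma pairSome (a b c d : slot) :
  [set Some a; Some b] = [set Some c; Some d] :> {set vtx} <-> [set a; b] = [set c; d].
Proof.
split=> H; first by apply/setP => x; have := congr1 (fun S : {set vtx} => Some x \in S) H; rewrite !inE.
apply/setP => [[y|]]; last by rewrite !inE.
have := congr1 (fun S : {set slot} => y \in S) H; rewrite !inE /=; done.
Qed.
Lemma pairNone (a b : slot) : [set None; Some a] = [set None; Some b] :> {set vtx} -> a = b.
Proof.
move=> H; have : (Some a : vtx) \in ([set None; Some b] : {set vtx}) by rewrite -H !inE eqxx orbT.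
by rewrite !inE /= => /eqP [].
Qed.
Lemma NoneInt (a c d : slot) (H : [set None; Some a] = [set Some c; Some d] :> {set vtx}) : False.
Proof. have : (None : vtx) \in ([set Some c; Some d] : {set vtx}) by rewrite -H !inE eqxx. by rewrite !inE. Qed.
Lemma in_pair (x a b : slot) : x \in [set a; b] -> x = a \/ x = b.
Proof. by rewrite !inE => /orP [/eqP|/eqP]; auto. Qed.


Lemma int_fwd (L : slot -> option Sym) (pi : slot -> Sym) (g : {perm slot}) : act_graph g (XE L pi :|: IE pi) = XE L pi :|: IE pi ->
  act_pattern g (varpi pi) = varpi pi.
Proof.
move=> H; apply/setP => P; apply/patP/idP.
- case=> e /varpi_P [i [j [Hi Hj Hij Hp ->]]] -> /=.
  have He : ([set Some i; Some j], (ty (pi i), None)) \in IE pi by apply/IE_P; exists i, j.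
  have : aE g ([set Some i; Some j], (ty (pi i), None)) \in XE L pi :|: IE pi.
    by rewrite -H act_mem // inE He orbT.
  rewrite aE_pair /= inE => /orP [/XE_P [j' [_ [E1 _]]]|/IE_P [i' [j' [Hi' Hj' Hij' Hp' [E1 E2]]]]].
    by exfalso; exact: (NoneInt (esym E1)).
  rewrite imset_pair; move/pairSome: E1 => ->; rewrite E2; apply/varpi_P; exists i', j'; done.
- case/varpi_P => i' [j' [Hi' Hj' Hij' Hp' ->]].
  have : ([set Some i'; Some j'], (ty (pi i'), None)) \in act_graph g (XE L pi :|: IE pi).
    by rewrite H inE; apply/orP; right; apply/IE_P; exists i', j'.
  case/actP => e0; rewrite inE => /orP [/XE_P [j [_ ->]]|/IE_P [i [j [Hi Hj Hij Hp ->]]]];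
    rewrite aE_pair /=.
    by case=> E1; exfalso; exact: (NoneInt (esym E1)).
  case=> /pairSome E1 E2; exists ([set i; j], ty (pi i)); first by apply/varpi_P; exists i, j.
  by rewrite /= imset_pair E1 E2.
Qed.

Lemma int_bwd (pi : slot -> Sym) (g : {perm slot}) : act_pattern g (varpi pi) = varpi pi -> act_graph g (IE pi) = IE pi.
Proof.
move=> H; apply/setP => E; apply/actP/idP.
- case=> e /IE_P [i [j [Hi Hj Hij Hp ->]]] ->; rewrite aE_pair /=.
  have : ([set g i; g j], ty (pi i)) \in varpi pi.
    rewrite -H -imset_pair; apply: (pat_mem g (e0 := ([set i; j], ty (pi i)))).
    by apply/varpi_P; exists i, j.
  case/varpi_P => i' [j' [Hi' Hj' Hij' Hp' [E1 E2]]]; apply/IE_P; exists i', j'; split=> //.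
  by rewrite E2; congr (_, _); apply/pairSome.
- case/IE_P => i' [j' [Hi' Hj' Hij' Hp' ->]].
  have : ([set i'; j'], ty (pi i')) \in act_pattern g (varpi pi).
    by rewrite H; apply/varpi_P; exists i', j'.
  case/patP => e0 /varpi_P [i [j [Hi Hj Hij Hp ->]]] /=; rewrite imset_pair; case=> E1 E2.
  exists ([set Some i; Some j], (ty (pi i), None)); first by apply/IE_P; exists i, j.
  by rewrite aE_pair /= E2; congr (_, _); apply/pairSome.
Qed.

Lemma GV1 (pi : slot -> Sym) (g : {perm slot}) s : col pi -> act_pattern g (varpi pi) = varpi pi ->
  ~~ isExt (pi s) -> ~~ isExt (pi (g s)).
Proof.
move=> Hc H Hs; have [t [Hts Hpt]] := col_partner Hc Hs.
have : ([set g s; g t], ty (pi s)) \in varpi pi.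
  rewrite -H -imset_pair; apply: (pat_mem g (e0 := ([set s; t], ty (pi s)))).
  by apply/varpi_P; exists s, t; split=> //; rewrite ?Hpt // eq_sym.
case/varpi_P => i' [j' [Hi' Hj' _ _ [E1 _]]].
have : g s \in [set i'; j'] by rewrite -E1 !inE eqxx.
by case/in_pair => ->.
Qed.

Lemma GV2 (pi : slot -> Sym) (g : {perm slot}) s : col pi -> act_pattern g (varpi pi) = varpi pi ->
  ~~ isExt (pi (g s)) -> ~~ isExt (pi s).
Proof.
move=> Hc H Hs; have [t [Hts Hpt]] := col_partner Hc Hs.
have : ([set g s; t], ty (pi (g s))) \in act_pattern g (varpi pi).
  by rewrite H; apply/varpi_P; exists (g s), t; split=> //; rewrite ?Hpt // eq_sym.
case/patP => e0 /varpi_P [i [j [Hi Hj _ _ ->]]] /= [E1 _].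
have : g s \in g @: [set i; j] by rewrite -E1 !inE eqxx.
by rewrite imset_pair => /in_pair [/perm_inj ->|/perm_inj ->].
Qed.

Lemma XE_act (L : slot -> option Sym) (pi : slot -> Sym) (g : {perm slot}) : (forall s, isExt (pi s) = isExt (pi (g s))) ->
  (forall s, isExt (pi s) -> ty (pi (g s)) = ty (pi s) /\ L (g s) = L s) ->
  act_graph g (XE L pi) = XE L pi.
Proof.
move=> He Ht; apply/setP => E; apply/actP/idP.
- case=> e /XE_P [j [Hj ->]] ->; rewrite aE_pair /=; apply/XE_P; exists (g j).
  have [T1 T2] := Ht j Hj; by rewrite -He T1 T2.
- case/XE_P => j' [Hj' ->]; have Hgj : g (((pinv g)) j') = j' by rewrite permKV.
  have Hj : isExt (pi (((pinv g)) j')) by rewrite He Hgj.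
  exists ([set None; Some (((pinv g)) j')], (ty (pi (((pinv g)) j')), L (((pinv g)) j'))); first by apply/XE_P; exists (((pinv g)) j').
  have [T1 T2] := Ht _ Hj; by rewrite aE_pair /= -T1 -T2 Hgj.
Qed.

Lemma GE_fix (pi : slot -> Sym) (g : {perm slot}) : col pi ->
  act_graph g (XE (fun j => Some (pi j)) pi :|: IE pi) = XE (fun j => Some (pi j)) pi :|: IE pi ->
  forall s, isExt (pi s) -> g s = s.
Proof.
move=> Hc H s Hs.
have : aE g ([set None; Some s], (ty (pi s), Some (pi s))) \in XE (fun j => Some (pi j)) pi :|: IE pi.
  by rewrite -H act_mem // inE; apply/orP; left; apply/XE_P; exists s.
rewrite aE_pair /= inE => /orP [/XE_P [j [Hj E]]|/IE_P [i [j [_ _ _ _ E]]]]; last by case: E.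
case: E => /pairNone E1 _ E3; rewrite E1; exact: col_ext_unique Hc Hs (esym E3).
Qed.

Lemma GE_fwd (pi1 pi2 : slot -> Sym) (f : {perm slot}) (h : {perm Sym}) : inrho h ->
  (forall t, pi1 t = h (pi2 (f t))) ->
  act_graph f (XE (fun j => Some (pi1 j)) pi1 :|: IE pi1) = XE (fun j => Some (pi2 j)) pi2 :|: IE pi2.
Proof.
case=> Hfix Hty Hrel.
have hext a : isExt (h a) = isExt a.
  apply/idP/idP => Ha; last by rewrite Hfix.
  have E := perm_inj (Hfix _ Ha); by rewrite -E.
rewrite act_U; congr (_ :|: _).
- apply/setP => E; apply/actP/idP.
  + case=> e /XE_P [j [Hj ->]] ->; rewrite aE_pair /=.
    have Hj2 : isExt (pi2 (f j)) by rewrite -hext -Hrel.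
    have E1 : pi1 j = pi2 (f j) by rewrite Hrel Hfix.
    by apply/XE_P; exists (f j); rewrite E1.
  + case/XE_P => j' [Hj' ->]; have Hfj : f (((pinv f)) j') = j' by rewrite permKV.
    have E1 : pi1 (((pinv f)) j') = pi2 j' by rewrite Hrel Hfj Hfix.
    exists ([set None; Some (((pinv f)) j')], (ty (pi1 (((pinv f)) j')), Some (pi1 (((pinv f)) j')))).
      by apply/XE_P; exists (((pinv f)) j'); rewrite E1.
    by rewrite aE_pair /= Hfj E1.
- apply/setP => E; apply/actP/idP.
  + case=> e /IE_P [i [j [Hi Hj Hij Hp ->]]] ->; rewrite aE_pair /=.
    apply/IE_P; exists (f i), (f j); split.
    * by rewrite -hext -Hrel.
    * by rewrite -hext -Hrel.
    * by rewrite (inj_eq (@perm_inj _ f)).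
    * by apply: (@perm_inj _ h); rewrite -!Hrel.
    * by rewrite Hrel Hty.
  + case/IE_P => i' [j' [Hi' Hj' Hij' Hp' ->]].
    have Hfi : f (((pinv f)) i') = i' by rewrite permKV.
    have Hfj : f (((pinv f)) j') = j' by rewrite permKV.
    exists ([set Some (((pinv f)) i'); Some (((pinv f)) j')], (ty (pi1 (((pinv f)) i')), None)).
      apply/IE_P; exists (((pinv f)) i'), (((pinv f)) j'); split.
      * by rewrite Hrel Hfi hext.
      * by rewrite Hrel Hfj hext.
      * by rewrite -(inj_eq (@perm_inj _ f)) Hfi Hfj.
      * by rewrite !Hrel Hfi Hfj Hp'.
      * by [].
    by rewrite aE_pair /= Hfi Hfj Hrel Hfi Hty.
Qed.

Lemma GE_bwd (pi1 pi2 : slot -> Sym) (g : {perm slot}) : col pi1 -> col pi2 ->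
  act_graph g (XE (fun j => Some (pi1 j)) pi1 :|: IE pi1) = XE (fun j => Some (pi2 j)) pi2 :|: IE pi2 ->
  exists h : {perm Sym}, inrho h /\ forall s, pi1 (((pinv g)) s) = h (pi2 s).
Proof.
move=> Hc1 Hc2 Hiso.
have F1 t : isExt (pi1 t) -> pi2 (g t) = pi1 t.
  move=> Ht.
  have : aE g ([set None; Some t], (ty (pi1 t), Some (pi1 t))) \in
         XE (fun j => Some (pi2 j)) pi2 :|: IE pi2.
    by rewrite -Hiso act_mem // inE; apply/orP; left; apply/XE_P; exists t.
  rewrite aE_pair /= inE => /orP [/XE_P [j [Hj E]]|/IE_P [i [j [_ _ _ _ E]]]]; last by case: E.
  by case: E => /pairNone E1 _ E3; rewrite E1 E3.
have F2 t : isExt (pi2 (g t)) -> pi1 t = pi2 (g t).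
  move=> Ht.
  have : ([set None; Some (g t)], (ty (pi2 (g t)), Some (pi2 (g t)))) \in
         act_graph g (XE (fun j => Some (pi1 j)) pi1 :|: IE pi1).
    by rewrite Hiso inE; apply/orP; left; apply/XE_P; exists (g t).
  case/actP => e0; rewrite inE => /orP [/XE_P [j [Hj ->]]|/IE_P [i [j [_ _ _ _ ->]]]];
    rewrite aE_pair /=.
    by case=> /pairNone E1 _ E3; rewrite E3 (perm_inj E1).
  by case=> E1; exfalso; exact: (NoneInt E1).
have F3 t1 t2 : t1 != t2 -> pi1 t1 = pi1 t2 -> ~~ isExt (pi1 t1) ->
    pi2 (g t1) = pi2 (g t2) /\ ty (pi2 (g t1)) = ty (pi1 t1).
  move=> H12 Hp Ht.
  have : aE g ([set Some t1; Some t2], (ty (pi1 t1), None)) \in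
         XE (fun j => Some (pi2 j)) pi2 :|: IE pi2.
    by rewrite -Hiso act_mem // inE; apply/orP; right; apply/IE_P; exists t1, t2; split=> //; rewrite -Hp.
  rewrite aE_pair /= inE => /orP [/XE_P [j [_ [E1 _]]]|/IE_P [i [j [Hi Hj _ Hp' [E1 E2]]]]].
    by exfalso; exact: (NoneInt (esym E1)).
  move/pairSome: E1 => E1.
  have M1 : g t1 \in [set i; j] by rewrite -E1 !inE eqxx.
  have M2 : g t2 \in [set i; j] by rewrite -E1 !inE eqxx orbT.
  have P x : x \in [set i; j] -> pi2 x = pi2 i by case/in_pair => ->.
  by rewrite (P _ M1) (P _ M2) E2.
have F4 u1 u2 : u1 != u2 -> pi2 u1 = pi2 u2 -> ~~ isExt (pi2 u1) ->
    pi1 (((pinv g)) u1) = pi1 (((pinv g)) u2).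
  move=> H12 Hp Hu.
  have : ([set Some u1; Some u2], (ty (pi2 u1), None)) \in
         act_graph g (XE (fun j => Some (pi1 j)) pi1 :|: IE pi1).
    by rewrite Hiso inE; apply/orP; right; apply/IE_P; exists u1, u2; split=> //; rewrite -Hp.
  case/actP => e0; rewrite inE => /orP [/XE_P [j [_ ->]]|/IE_P [i [j [Hi Hj _ Hp' ->]]]];
    rewrite aE_pair /=.
    by case=> E1; exfalso; exact: (NoneInt (esym E1)).
  case=> /pairSome E1 _.
  have P x : x \in [set g i; g j] -> pi1 (((pinv g)) x) = pi1 i by case/in_pair => ->; rewrite permK.
  by rewrite !P // -E1 !inE eqxx ?orbT.
have A' t1 t2 : (pi2 (g t1) == pi2 (g t2)) = (pi1 t1 == pi1 t2).
  apply/eqP/eqP => E.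
  - case: (eqVneq t1 t2) => [->//|H12].
    case Hu: (isExt (pi2 (g t1))).
      by rewrite (perm_inj (col_ext_unique Hc2 Hu (esym E))).
    have := F4 _ _ _ E (negbT Hu); rewrite !permK; apply.
    by rewrite (inj_eq (@perm_inj _ g)).
  - case: (eqVneq t1 t2) => [->//|H12].
    case H1: (isExt (pi1 t1)).
      by rewrite (col_ext_unique Hc1 H1 (esym E)).
    by case: (F3 _ _ H12 E (negbT H1)).
have B' t : ty (pi1 t) = ty (pi2 (g t)).
  case H1: (isExt (pi1 t)); first by rewrite F1.
  have [t' [Ht't Hp]] := col_partner Hc1 (negbT H1).
  have := F3 t t' _ (esym Hp) (negbT H1); rewrite eq_sym Ht't => /(_ isT) [_ ->]; done.
have [h [Hh Hty]] := perm_ext (F := pi2) (G := fun u => pi1 (((pinv g)) u)) (ty := ty)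
  (fun u v => etrans (etrans (f_equal2 (fun a b => pi2 a == pi2 b) (esym (permKV g u)) (esym (permKV g v)))
                 (A' _ _)) erefl)
  (fun u => etrans (B' _) (f_equal (fun x => ty (pi2 x)) (permKV g u))).
exists h; split; last by move=> s; rewrite Hh.
split=> //.
move=> a Ha; have [u Hu] := col_ext_exists Hc2 Ha; rewrite -Hu Hh (F2 (((pinv g)) u)) permKV //.
by rewrite Hu.
Qed.

End M.

Theorem theorem4 (T V : Type) (Ty : finType) (range : Ty -> T -> Prop)
  (k : nat) (X : 'I_k -> tensor T V Ty)
  (Sym : finType) (ty : Sym -> Ty) (isExt : pred Sym)
  (pi pi1 pi2 : 'I_(nslots T V Ty k X) -> Sym) :
  coloring T V Ty k X Sym ty isExt pi ->
  coloring T V Ty k X Sym ty isExt pi1 ->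
  coloring T V Ty k X Sym ty isExt pi2 ->
  (GSrho_equiv T V Ty range k X Sym ty isExt pi1 pi2 <->
     isomorphic_GS T V Ty range k X Sym
       (GE T V Ty k X Sym ty isExt pi1) (GE T V Ty k X Sym ty isExt pi2)) /\
  (forall g, Aut_GS T V Ty range k X Sym (Gskel T V Ty k X Sym ty isExt pi) g <->
             G_varpi T V Ty range k X Sym ty isExt pi g) /\
  (forall g, Aut_GS T V Ty range k X Sym (GE T V Ty k X Sym ty isExt pi) g <->
             Ker_phi T V Ty range k X Sym ty isExt pi g).
Proof.
move=> Hc Hc1 Hc2.
have GEe p : GE T V Ty k X Sym ty isExt p = XE ty isExt (fun j => Some (p j)) p :|: IE ty isExt p by [].
have Gske p : Gskel T V Ty k X Sym ty isExt p = XE ty isExt (fun _ => None) p :|: IE ty isExt p by [].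
split; [|split].
- split.
  + case=> g [h [Hg [Hh Hrel]]]; exists ((pinv g)); split; first exact: inGS_inv.
    rewrite !GEe; apply: (GE_fwd Hh) => t; by rewrite -Hrel permKV.
  + case=> g [Hg Hiso]; rewrite !GEe in Hiso.
    have [h [Hh Hrel]] := GE_bwd Hc1 Hc2 Hiso.
    exists ((pinv g)), h; split; [exact: inGS_inv|split=> //].
- move=> g; split.
  + case=> Hg H; split=> //; rewrite Gske in H; exact: int_fwd H.
  + case=> Hg H; split=> //; rewrite Gske act_U (int_bwd H) XE_act //.
      move=> s; apply/idP/idP => H'.
        by move: H'; apply: contraLR; apply: GV2 Hc H.
      by move: H'; apply: contraLR; apply: GV1 Hc H.
    move=> s _; split=> //; exact: (inGS_ty Hc Hg).
- move=> g; split.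
  + case=> Hg H; rewrite GEe in H; split; first by split=> //; exact: int_fwd H.
    move=> s; rewrite inE; exact: (GE_fix Hc H).
  + case=> [[Hg H] Hfix]; split=> //; rewrite GEe act_U (int_bwd H) XE_act //.
      move=> s; apply/idP/idP => H'.
        by rewrite Hfix // inE.
      by move: H'; apply: contraLR; apply: GV1 Hc H.
    by move=> s Hs; rewrite Hfix // inE.
Qed.
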